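(* Let $I\subseteq R$ be an $\mathfrak m$-primary monomial ideal. The following are equivalent: (1) $I$ is good; (2) for every integer $l\ge 1$ and every monomial $m\in I^l$ there exist $a_1,\dots,a_n\in\mathbb N$ with $m\in B_{a_1,\dots,a_n}$ and $a_1+\dots+a_n\ge l-1$; (3) for every integer $l\ge1$ and all $m_1,\dots,m_l\in G(I)$ there exist $a_1,\dots,a_n\in\mathbb N$ with $m_1\cdots m_l\in B_{a_1,\dots,a_n}$ and $a_1+\dots+a_n\ge l-1$.
   Context: Let $\mathbb K$ be a field, $R=\mathbb K[x_1,\dots,x_n]$, $\mathfrak m=\langle x_1,\dots,x_n\rangle$, $\mathbb N=\{0,1,2,\dots\}$. A monomial $x_1^{\alpha_1}\cdots x_n^{\alpha_n}$ is identified with the point $(\alpha_1,\dots,\alpha_n)\in\mathbb N^n$. For a monomial ideal $I$, $G(I)$ denotes its (unique) minimal monomial generating set. If $I$ is an $\mathfrak m$-primary monomial ideal, then for each $i$ there is a unique $d_i\ge1$ with $x_i^{d_i}\in G(I)$; write $\mu_i=x_i^{d_i}$. For $(a_1,\dots,a_n)\in\mathbb N^n$ the box associated to $I$ is $B_{a_1,\dots,a_n}=([a_1d_1,(a_1+1)d_1]\times\cdots\times[a_nd_n,(a_n+1)d_n])\cap\mathbb N^n$; a monomial belongs to a box if its exponent vector does. $I$ is called good if for every integer $l\ge1$, every element of $G(I^l)$ belongs to some box $B_{a_1,\dots,a_n}$ with $a_1+\dots+a_n=l-1$; otherwise $I$ is called bad. *)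

(* Defs.v *)
(* Monomial ideals of K[x_1..x_n] are represented
   combinatorially by their sets of monomials = exponent vectors in N^n. *)
From mathcomp Require Import all_boot.
Set Implicit Arguments. Unset Strict Implicit. Unset Printing Implicit Defensive.

Definition mon (n : nat) := 'I_n -> nat.

Definition mdiv n (m m' : mon n) : Prop := forall i, m i <= m' i.

Definition pure n (i : 'I_n) (d : nat) : mon n := fun j => if j == i then d else 0.

Definition mone n : mon n := fun _ => 0.

Definition is_monomial_ideal n (I : mon n -> Prop) : Prop :=
  forall m m', I m -> mdiv m m' -> I m'.

Definition m_primary n (I : mon n -> Prop) : Prop :=
  ~ I (@mone n) /\ forall i : 'I_n, exists d, I (pure i d).

Definition mingen n (I : mon n -> Prop) (m : mon n) : Prop :=
  I m /\ forall m', I m' -> mdiv m' m -> mdiv m m'.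

Definition mprod n l (ms : 'I_l -> mon n) : mon n :=
  fun i => \sum_(k < l) ms k i.

Definition ipow n (I : mon n -> Prop) (l : nat) (m : mon n) : Prop :=
  exists ms : 'I_l -> mon n, (forall k, I (ms k)) /\ mdiv (mprod ms) m.

Definition in_box n (d a : 'I_n -> nat) (m : mon n) : Prop :=
  forall i, a i * d i <= m i <= (a i).+1 * d i.

Definition asum n (a : 'I_n -> nat) : nat := \sum_(i < n) a i.

(* I is good (d_i the exponents of the pure powers in G(I)) *)
Definition good n (I : mon n -> Prop) (d : 'I_n -> nat) : Prop :=
  forall l, 1 <= l -> forall m, mingen (ipow I l) m ->
    exists a : 'I_n -> nat, in_box d a m /\ asum a = l - 1.

(* Main.v *)
Require Import Defs.
From mathcomp Require Import all_boot.
From mathcomp Require Import zify.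
From Stdlib Require Import Classical IndefiniteDescription.
Set Implicit Arguments. Unset Strict Implicit. Unset Printing Implicit Defensive.

Lemma between n (lo hi : 'I_n -> nat) : (forall i, lo i <= hi i) ->
  forall k, asum lo + k <= asum hi ->
  exists a : 'I_n -> nat, (forall i, lo i <= a i <= hi i) /\ asum a = asum lo + k.
Proof.
move=> Hlh; elim=> [|k IH] Hk.
  by exists lo; split=> [i|]; [rewrite leqnn Hlh | rewrite addn0].
have [a [Ha Hs]] : exists a : 'I_n -> nat,
    (forall i, lo i <= a i <= hi i) /\ asum a = asum lo + k.
  by apply: IH; lia.
case: (pickP (fun i => a i < hi i)) => [i Hi | Hnone].
  exists (fun j => if j == i then (a j).+1 else a j); split.
    move=> j; case: eqP => [->|_]; last exact: Ha.
    by have := Ha i; move/andP: (Ha i) => [H1 H2] _; apply/andP; split; lia.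
  rewrite /asum (bigD1 i) //= eqxx.
  have -> : \sum_(j < n | j != i) (if j == i then (a j).+1 else a j)
          = \sum_(j < n | j != i) a j.
    by apply: eq_bigr => j /negbTE ->.
  move: Hs; rewrite /asum (bigD1 i) //= addSn => ->; by rewrite addnS.
exfalso.
have : asum hi <= asum a.
  rewrite /asum; apply: leq_sum => i _; have := Hnone i; rewrite /= => /negbT.
  by rewrite -leqNgt.
lia.
Qed.

Lemma d_pos n (I : mon n -> Prop) (d : 'I_n -> nat) :
  is_monomial_ideal I -> m_primary I -> (forall i : 'I_n, mingen I (pure i (d i))) -> forall i, 0 < d i.
Proof.
move=> HI [H1 _] Hd i; case: (posnP (d i)) => // H0; exfalso.
have [Hp _] := Hd i; apply: H1; apply: (HI _ _ Hp) => j.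
by rewrite /pure H0; case: (j == i).
Qed.

Lemma floor_box n (d : 'I_n -> nat) (m : mon n) : (forall i, 0 < d i) ->
  in_box d (fun i => m i %/ d i) m.
Proof.
move=> Hd i; apply/andP; split; first exact: leq_divM.
exact: ltnW (ltn_ceil _ (Hd i)).
Qed.

Lemma box_le n (d a : 'I_n -> nat) (m : mon n) : (forall i, 0 < d i) ->
  in_box d a m -> forall i, a i <= m i %/ d i.
Proof.
move=> Hd Hb i; rewrite leq_divRL //; by case/andP: (Hb i).
Qed.

Lemma upgrade n (d a : 'I_n -> nat) (m0 m : mon n) : (forall i, 0 < d i) ->
  in_box d a m0 -> mdiv m0 m -> exists a', in_box d a' m /\ asum a <= asum a'.
Proof.
move=> Hd Hb Hm; exists (fun i => m i %/ d i); split; first exact: floor_box.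
rewrite /asum; apply: leq_sum => i _.
apply: leq_trans (box_le Hd Hb i) _; exact: leq_div2r.
Qed.

Lemma mingen_exists n (P : mon n -> Prop) :
  forall m, P m -> exists m0, mingen P m0 /\ mdiv m0 m.
Proof.
suff H : forall s m, \sum_(i < n) m i < s -> P m -> exists m0, mingen P m0 /\ mdiv m0 m.
  by move=> m; apply: (H (\sum_(i < n) m i).+1).
elim=> [//|s IH] m Hs Pm.
case: (classic (mingen P m)) => Hmg.
  by exists m; split=> // i.
have [m' [Pm' [Hdiv Hnd]]] : exists m', P m' /\ mdiv m' m /\ ~ mdiv m m'.
  apply: NNPP => Hc; apply: Hmg; split=> // m' Pm' Hd'.
  apply: NNPP => Hn; apply: Hc; by exists m'.
have [i Hi] : exists i, m' i < m i.
  apply: NNPP => Hc; apply: Hnd => i; rewrite leqNgt; apply/negP => Hl.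
  by apply: Hc; exists i.
have Hlt : \sum_(j < n) m' j < \sum_(j < n) m j.
  rewrite (bigD1 i) //= [X in _ < X](bigD1 i) //= -addSn.
  by apply: leq_add => //; apply: leq_sum => j _; apply: Hdiv.
have [m0 [H1 H2]] := IH m' ltac:(lia) Pm'.
exists m0; split=> // j; exact: leq_trans (H2 j) (Hdiv j).
Qed.

Lemma ipow_ext n (I : mon n -> Prop) l (m g m' : mon n) :
  ipow I l m -> I g -> (forall i, m i + g i <= m' i) -> ipow I l.+1 m'.
Proof.
move=> [ms [Hms Hdv]] Ig Hle.
exists (fun k => if unlift ord_max k is Some j then ms j else g); split.
  by move=> k; case: (unlift ord_max k).
move=> i; rewrite /mprod big_ord_recr /= unlift_none.
have -> : \sum_(k < l) (if unlift ord_max (widen_ord (leqnSn l) k) is Some j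
                        then ms j else g) i = \sum_(k < l) ms k i.
  apply: eq_bigr => k _.
  have -> : widen_ord (leqnSn l) k = lift ord_max k by apply: val_inj; rewrite /= /bump leqNgt ltn_ord.
  by rewrite liftK.
apply: leq_trans (Hle i); rewrite leq_add2r; exact: Hdv.
Qed.

Lemma ipow_pure n (I : mon n -> Prop) (d : 'I_n -> nat) :
  (forall i : 'I_n, I (pure i (d i))) ->
  forall l (c : 'I_n -> nat), asum c = l -> ipow I l (fun i => c i * d i).
Proof.
move=> Hd; elim=> [|l IH] c Hc.
  exists (fun k : 'I_0 => @mone n); split; first by case.
  by move=> i; rewrite /mprod big_ord0.
case: (pickP (fun i => 0 < c i)) => [i Hi | Hnone]; last first.
  exfalso; move: Hc; rewrite /asum big1 // => j _.
  by have := Hnone j; rewrite /= lt0n => /negbT; rewrite negbK => /eqP.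
pose c' := fun j => if j == i then (c j).-1 else c j.
apply: (@ipow_ext _ _ _ (fun j => c' j * d j) (pure i (d i))).
- apply: IH; move: Hc; rewrite /asum (bigD1 i) //= [X in _ -> X = _](bigD1 i) //=.
  rewrite /c' eqxx.
  have -> : \sum_(j < n | j != i) (if j == i then (c j).-1 else c j)
          = \sum_(j < n | j != i) c j by apply: eq_bigr => j /negbTE ->.
  move: Hi => /= Hi0; rewrite -{1}(prednK Hi0) addSn => -[<-]; done.
- exact: Hd.
- move=> j; rewrite /c' /pure; case: eqP => [->|_]; last by rewrite addn0.
  move: Hi => /= Hi0; rewrite -{2}(prednK Hi0) mulSn addnC.
  done.
Qed.

Theorem mainTheorem1 (n : nat) (I : mon n -> Prop) (d : 'I_n -> nat)
  (HI : is_monomial_ideal I) (Hprim : m_primary I)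
  (Hd : forall i : 'I_n, mingen I (pure i (d i))) :
  (good I d <->
     (forall l, 1 <= l -> forall m, ipow I l m ->
        exists a : 'I_n -> nat, in_box d a m /\ l - 1 <= asum a))
  /\
  ((forall l, 1 <= l -> forall m, ipow I l m ->
        exists a : 'I_n -> nat, in_box d a m /\ l - 1 <= asum a) <->
   (forall l, 1 <= l -> forall ms : 'I_l -> mon n, (forall k, mingen I (ms k)) ->
        exists a : 'I_n -> nat, in_box d a (mprod ms) /\ l - 1 <= asum a)).
Proof.
have Hdp := d_pos HI Hprim Hd.
split; split.
- move=> Hg l Hl m Hm.
  have [m0 [Hm0 Hdv]] := mingen_exists Hm.
  have [a [Hb Ha]] := Hg l Hl m0 Hm0.
  have [a' [Hb' Ha']] := upgrade Hdp Hb Hdv.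
  by exists a'; split=> //; rewrite -Ha.
- move=> H2 l Hl m [Hm Hmin].
  pose lo := fun i => (m i - 1) %/ d i.
  pose hi := fun i => m i %/ d i.
  have Hlh : forall i, lo i <= hi i by move=> i; apply: leq_div2r; lia.
  have Hhi : l - 1 <= asum hi.
    have [a [Hb Ha]] := H2 l Hl m Hm.
    apply: leq_trans Ha _; rewrite /asum; apply: leq_sum => i _; exact: box_le Hb i.
  have Hlo : asum lo <= l - 1.
    case: (leqP (asum lo) (l - 1)) => // Hgt; exfalso.
    have H0 : asum (fun _ : 'I_n => 0) = 0 by rewrite /asum big1.
    have [c [Hc Hcs]] := @between n (fun _ => 0) lo (fun i => leq0n _) l
      ltac:(rewrite H0; lia).
    rewrite H0 add0n in Hcs.
    have Hcd : forall i, c i * d i <= m i - 1.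
      move=> i; apply: leq_trans (leq_divM (m i - 1) (d i)).
      by rewrite leq_mul2r; case/andP: (Hc i) => _ ->; rewrite orbT.
    have Hip := ipow_pure (fun i => proj1 (Hd i)) Hcs.
    have Hle := Hmin _ Hip (fun i => leq_trans (Hcd i) (leq_subr 1 (m i))).
    case: (pickP (fun i => 0 < c i)) => [i Hi | Hnone].
      have := Hle i; have := Hcd i; have := Hdp i; move: Hi => /=.
      move=> Hi Hdi; have : 0 < c i * d i by rewrite muln_gt0 Hi Hdi.
      lia.
    move: Hcs; rewrite /asum big1 => [|j _]; first lia.
    by have := Hnone j; rewrite /= lt0n => /negbT; rewrite negbK => /eqP.
  have [a [Ha Has]] := @between n lo hi Hlh (l - 1 - asum lo) ltac:(lia).
  exists a; split; last lia.
  move=> i; have := Ha i; have := Hdp i; rewrite /lo /hi => Hdi /andP [H1 H2'].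
  apply/andP; split.
    apply: leq_trans (leq_divM (m i) (d i)); by rewrite leq_mul2r H2' orbT.
  have := ltn_ceil (m i - 1) Hdi.
  have : ((m i - 1) %/ d i).+1 * d i <= (a i).+1 * d i by rewrite leq_mul2r ltnS H1 orbT.
  lia.
- move=> H2 l Hl ms Hms; apply: H2 => //.
  by exists ms; split=> [k|i //]; case: (Hms k).
- move=> H3 l Hl m [ms [Hms Hdv]].
  have Hg : forall k, { g | mingen I g /\ mdiv g (ms k) }.
    move=> k; apply: constructive_indefinite_description.
    exact: mingen_exists (Hms k).
  pose g := fun k => proj1_sig (Hg k).
  have [a [Hb Ha]] := H3 l Hl g (fun k => proj1 (proj2_sig (Hg k))).
  have Hle : mdiv (mprod g) m.
    move=> i; apply: leq_trans (Hdv i); rewrite /mprod; apply: leq_sum => k _.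
    exact: (proj2 (proj2_sig (Hg k))).
  have [a' [Hb' Ha']] := upgrade Hdp Hb Hle.
  by exists a'; split=> //; apply: leq_trans Ha Ha'.
Qed.
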